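(* Let $q$ be a prime power, $e\ge 2$, $r$ a positive integer, let $\xi$ be a primitive element of $\mathbb{F}_{q^e}^*$, and for integers $m$ let $f_m(x)=x^r(x^{q-1}+\xi^m)\in\mathbb{F}_{q^e}[x]$. If $f_j(x)$ does not permute $\mathbb{F}_{q^e}$ for every $0\le j<q-1$, then $f_m(x)$ does not permute $\mathbb{F}_{q^e}$ for every $0\le m<q^e-1$. *)

(* Defs.v *)
From mathcomp Require Import all_boot all_order all_algebra all_field.
Set Implicit Arguments. Unset Strict Implicit. Unset Printing Implicit Defensive.
Import GRing.Theory.
Local Open Scope ring_scope.

Definition prime_power (q : nat) : Prop :=
  exists p k : nat, [/\ prime p, (0 < k)%N & q = (p ^ k)%N].

Definition fm (F : finFieldType) (q r : nat) (xi : F) (m : nat) : F -> F :=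
  fun x => x ^+ r * (x ^+ (q - 1) + xi ^+ m).

Definition permutes (F : finFieldType) (f : F -> F) : Prop := bijective f.

(* Main.v *)
Require Import Defs.
From mathcomp Require Import all_boot all_order all_algebra all_field.
From mathcomp Require Import ring.
Local Open Scope ring_scope.
Import GRing.Theory.

Theorem proposition5p5 (F : finFieldType) (q e r : nat) (xi : F) :
  prime_power q -> (2 <= e)%N -> (0 < r)%N ->
  #|F| = (q ^ e)%N ->
  (q ^ e - 1)%N.-primitive_root xi ->
  (forall j : nat, (j < q - 1)%N -> ~ permutes (fm q r xi j)) ->
  forall m : nat, (m < q ^ e - 1)%N -> ~ permutes (fm q r xi m).
Proof.
move=> [p [k [pp k0 ->]]] e2 r0 cardF prim Hj m mlt bij.
have q1 : (0 < p ^ k - 1)%N.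
  have := prime_gt1 pp => p1.
  have : (1 < p ^ k)%N by rewrite -{1}(expn0 p) ltn_exp2l.
  by rewrite subn_gt0.
set d := (p ^ k - 1)%N in q1 *.
have xi0 : xi != 0.
  apply/eqP => xi0; have := prim_expr_order prim; rewrite xi0 expr0n.
  move: (leq_ltn_trans (leq0n m) mlt).
  by case: (_ ^ e - 1)%N => //= n _ /esym/eqP; rewrite oner_eq0.
set t := (m %/ d)%N; set j := (m %% d)%N; set c := xi ^+ t.
have c0 : c != 0 by rewrite expf_neq0.
have key : forall y, fm (p ^ k) r xi m (c * y) = c ^+ (r + d) * fm (p ^ k) r xi j y.
  move=> y; rewrite /fm -/d.
  have -> : xi ^+ m = c ^+ d * xi ^+ j by rewrite /c {1}(divn_eq m d) exprD exprM.
  by rewrite !exprMn exprD; ring.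
apply: (Hj j); first by rewrite ltn_mod.
apply: injF_bij => y1 y2 eq12.
have cd0 : c ^+ (r + d) != 0 by rewrite expf_neq0.
have : fm (p ^ k) r xi m (c * y1) = fm (p ^ k) r xi m (c * y2) by rewrite !key eq12.
move/(bij_inj bij)/mulfI; exact.
Qed.
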